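(* Let $G$ be a finite EPO group. Then $\mathcal{S}(G)$ is cyclically separable if and only if either $pq$ divides $|G|$ for some primes $p > q \geq 5$, or at least two of the following three conditions hold: (i) $p$ divides $|G|$ for some prime $p \geq 5$; (ii) $3$ divides $|G|$ and $G$ has a Sylow $3$-subgroup which is not cyclic or is not normal in $G$; (iii) $2$ divides $|G|$ and $G$ has a Sylow $2$-subgroup which is not cyclic or is not normal in $G$.
   Context: A finite group is an EPO group if every non-identity element has prime order. All graphs are simple and undirected. For a finite group $G$, the order supergraph $\mathcal{S}(G)$ is the graph with vertex set $G$ in which two distinct vertices $x,y$ are adjacent if and only if the order of $x$ divides the order of $y$ or the order of $y$ divides the order of $x$. For a graph $\Gamma$, a vertex cutset is a set $S$ of vertices such that $\Gamma - S$ is disconnected; a cyclic vertex cutset is a vertex cutset $S$ such that $\Gamma - S$ has at least two connected components each of which contains a cycle. $\Gamma$ is called cyclically separable if it has a cyclic vertex cutset. *)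

(* Defs.v *)
From mathcomp Require Import all_boot all_fingroup all_solvable.
Set Implicit Arguments. Unset Strict Implicit. Unset Printing Implicit Defensive.
Local Open Scope group_scope.

Definition EPO (gT : finGroupType) (G : {group gT}) : Prop :=
  forall x, x \in G -> x != 1 -> prime #[x].

(* Adjacency of the order supergraph S(G) (vertex set G): distinct x, y
   whose orders divide one another. *)
Definition osg_adj (gT : finGroupType) : rel gT :=
  fun x y => (x != y) && ((#[x] %| #[y]) || (#[y] %| #[x])).

Definition induced (T : finType) (e : rel T) (W : {set T}) : rel T :=
  fun x y => [&& x \in W, y \in W & e x y].

Definition component (T : finType) (e : rel T) (W : {set T}) (x : T) : {set T} :=
  [set z in W | connect (induced e W) x z].

Definition is_cycle (T : finType) (e : rel T) (c : seq T) : bool :=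
  [&& 3 <= size c, uniq c & path.cycle e c].

Definition has_cycle_in (T : finType) (e : rel T) (C : {set T}) : Prop :=
  exists c : seq T, is_cycle e c /\ {subset c <= C}.

Definition cyclic_vertex_cutset (T : finType) (e : rel T) (V S : {set T}) : Prop :=
  exists x y, [/\ x \in V :\: S, y \in V :\: S,
     ~~ connect (induced e (V :\: S)) x y,
     has_cycle_in e (component e (V :\: S) x) &
     has_cycle_in e (component e (V :\: S) y)].

Definition cyclically_separable (T : finType) (e : rel T) (V : {set T}) : Prop :=
  exists S : {set T}, cyclic_vertex_cutset e V S.

Definition bad_sylow (gT : finGroupType) (G : {group gT}) (p : nat) : Prop :=
  exists P : {group gT}, P \in 'Syl_p(G) /\ (~~ cyclic P \/ ~~ (P <| G)).

(* Main.v *)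
Require Import Defs.
From mathcomp Require Import all_boot all_fingroup all_solvable.
From Stdlib Require Import Classical.
Set Implicit Arguments. Unset Strict Implicit.
Local Open Scope group_scope.

Definition three (gT : finGroupType) (G : {group gT}) (p : nat) : Prop :=
  exists a b c : gT, [/\ [/\ a \in G, b \in G & c \in G],
    [/\ a != b, a != c & b != c] & [/\ #[a] = p, #[b] = p & #[c] = p]].

Lemma adj_ord (gT : finGroupType) (G : {group gT}) x y : EPO G ->
  x \in G -> y \in G -> x != 1 -> y != 1 -> osg_adj x y -> #[x] = #[y].
Proof.
move=> epo xG yG x1 y1 /andP[_ /orP[h|h]];
  have px := epo _ xG x1; have py := epo _ yG y1.
  by apply/eqP; rewrite -dvdn_prime2.
by apply/esym/eqP; rewrite -dvdn_prime2.
Qed.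

Lemma conn_ord (gT : finGroupType) (G : {group gT}) (W : {set gT}) x z : EPO G ->
  W \subset G -> 1 \notin W -> connect (induced (@osg_adj gT) W) x z -> #[x] = #[z].
Proof.
move=> epo sWG W1 c.
have cl : closed (induced (@osg_adj gT) W) [pred u | #[u] == #[x]].
  move=> u v /and3P[uW vW e] /=.
  have u1 : u != 1 by apply: contraNneq W1 => <-.
  have v1 : v != 1 by apply: contraNneq W1 => <-.
  by rewrite !inE /= (adj_ord epo (subsetP sWG _ uW) (subsetP sWG _ vW) u1 v1 e).
have := closed_connect cl c; rewrite !inE /= eqxx => /esym/eqP.
by [].
Qed.

Lemma cyc3 (gT : finGroupType) (G : {group gT}) a b c p : prime p ->
  [/\ a \in G, b \in G & c \in G] -> [/\ a != b, a != c & b != c] ->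
  [/\ #[a] = p, #[b] = p & #[c] = p] ->
  has_cycle_in (@osg_adj gT) (component (@osg_adj gT) (G :\: [set 1]) a).
Proof.
move=> pp [aG bG cG] [ab ac bc] [oa ob oc].
have n1 : forall z : gT, #[z] = p -> z != 1.
  by move=> z oz; rewrite -order_eq1 oz; case: (p) pp => [|[]].
have Wa : a \in G :\: [set 1] by rewrite !inE aG andbT n1.
have Wb : b \in G :\: [set 1] by rewrite !inE bG andbT n1.
have Wc : c \in G :\: [set 1] by rewrite !inE cG andbT n1.
exists [:: a; b; c]; split.
  rewrite /is_cycle /= !inE negb_or ab ac bc /=.
  by rewrite /osg_adj ab bc eq_sym ac oa ob oc dvdnn.
move=> z; rewrite !inE => /or3P[]/eqP->.
- by rewrite n1 // aG connect0.
- rewrite n1 // bG /=; apply: connect1; by rewrite /induced Wa Wb /osg_adj ab oa ob dvdnn.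
- rewrite n1 // cG /=; apply: connect1; by rewrite /induced Wa Wc /osg_adj ac oa oc dvdnn.
Qed.

Lemma graph_iff (gT : finGroupType) (G : {group gT}) : EPO G ->
  cyclically_separable (@osg_adj gT) G <->
  exists p q, [/\ prime p, prime q, p != q, three G p & three G q].
Proof.
move=> epo; split.
  case=> S [x [y [xW yW nxy cx cy]]].
  move: cx cy; set W := G :\: S in xW yW nxy * => cx cy.
  have sWG : W \subset G by apply: subsetDl.
  have W1 : 1 \notin W.
    apply/negP => W1; apply/negP: nxy.
    rewrite negbK; apply: (connect_trans (y:=1)).
      case: (eqVneq x 1) => [->|x1]; first exact: connect0.
      by apply: connect1; rewrite /induced xW W1 /osg_adj x1 order1 dvd1n orbT.
    case: (eqVneq y 1) => [->|y1]; first exact: connect0.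
    by apply: connect1; rewrite /induced yW W1 /osg_adj eq_sym y1 order1 dvd1n.
  have key : forall z, z \in W -> has_cycle_in (@osg_adj gT) (component (@osg_adj gT) W z) ->
      prime #[z] /\ three G #[z].
    move=> z zW [c [cc sc]].
    have zG := subsetP sWG _ zW.
    split; first by apply: epo => //; apply: contraNneq W1 => <-.
    move: cc sc; case: c => [|a [|b [|d r]]] // /and3P[_ u _] sc.
    have ha : forall w, w \in [:: a, b, d & r] -> w \in G /\ #[w] = #[z].
      move=> w /sc; rewrite inE => /andP[wW cw].
      by split; [apply: (subsetP sWG) | apply/esym/(conn_ord epo sWG W1 cw)].
    have [aG oa] := ha a (mem_head _ _).
    have [bG ob] : b \in G /\ #[b] = #[z] by apply: ha; rewrite !inE eqxx orbT.
    have [dG od] : d \in G /\ #[d] = #[z] by apply: ha; rewrite !inE eqxx !orbT.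
    move: u; rewrite /= !inE !negb_or => /and3P[/and3P[ab ad _] /andP[bd _] _].
    by exists a, b, d.
  have [px tx] := key x xW cx.
  have [py ty] := key y yW cy.
  exists #[x], #[y]; split => //.
  apply/negP => /eqP e; move/negP: nxy; apply.
  case: (eqVneq x y) => [->|xy]; first exact: connect0.
  by apply: connect1; rewrite /induced xW yW /osg_adj xy e dvdnn.
case=> p [q [pp pq npq [a [b [c [Ga Dab Oa]]]] [a' [b' [c' [Ga' Dab' Oa']]]]]].
exists [set 1]; exists a, a'.
have n1 : forall (z : gT) r, prime r -> #[z] = r -> z != 1.
  by move=> z r pr oz; rewrite -order_eq1 oz; case: (r) pr => [|[]].
case: Ga Dab Oa => aG bG cG [ab ac bc] [oa ob oc].
case: Ga' Dab' Oa' => aG' bG' cG' [ab' ac' bc'] [oa' ob' oc'].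
split.
- by rewrite !inE aG andbT (n1 _ p).
- by rewrite !inE aG' andbT (n1 _ q).
- apply/negP => /(conn_ord epo (subsetDl _ _)).
  by rewrite !inE eqxx /= oa oa' => /(_ isT) /eqP; apply/negP.
- exact: (cyc3 pp (And3 aG bG cG) (And3 ab ac bc) (And3 oa ob oc)).
- exact: (cyc3 pq (And3 aG' bG' cG') (And3 ab' ac' bc') (And3 oa' ob' oc')).
Qed.

Lemma three_big (gT : finGroupType) (G : {group gT}) p :
  prime p -> 5 <= p -> p %| #|G| -> three G p.
Proof.
move=> pp p5 pG; have [x xG ox] := Cauchy pp pG.
have oX : forall k, 0 < k < p -> #[x ^+ k] = p.
  move=> k /andP[k0 kp]; rewrite orderXgcd ox.
  have : coprime p k by rewrite prime_coprime //; apply/negP => /(dvdn_leq k0); rewrite leqNgt kp.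
  by rewrite /coprime => /eqP ->; rewrite divn1.
have nX : forall i j, i < p -> j < p -> i != j -> x ^+ i != x ^+ j.
  by move=> i j ip jp ij; rewrite eq_expg_mod_order ox !modn_small.
exists (x ^+ 1), (x ^+ 2), (x ^+ 3); split.
- by split; apply: groupX.
- by split; apply: nX => //; apply: leq_trans p5.
- by split; apply: oX; rewrite /=; apply: leq_trans p5.
Qed.

Lemma ord_p (gT : finGroupType) (G Q : {group gT}) p z : EPO G -> prime p ->
  p.-group Q -> Q \subset G -> z \in Q -> z != 1 -> #[z] = p.
Proof.
move=> epo pp pQ sQG zQ z1.
have pz := epo _ (subsetP sQG _ zQ) z1.
have := mem_p_elt pQ zQ; rewrite /p_elt pnatE // inE.
by move/eqP.
Qed.

Lemma two_to_three (gT : finGroupType) (G : {group gT}) p x y : EPO G ->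
  (p = 2 \/ p = 3) -> x \in G -> y \in G -> #[x] = p -> #[y] = p ->
  y \notin <[x]> -> three G p.
Proof.
move=> epo hp xG yG ox oy yx.
have xy : x != y by apply: contraNneq yx => <-; apply: cycle_id.
have x1 : x != 1 by rewrite -order_eq1 ox; case: hp => ->.
have y1 : y != 1 by rewrite -order_eq1 oy; case: hp => ->.
case: hp => ep.
  case: (eqVneq (x * y) (y * x)) => cxy.
    have xyG : x * y \in G by rewrite groupM.
    have xy1 : x * y != 1.
      apply: contraNneq yx => h; have -> : y = x^-1 by rewrite -(mulKg x y) h mulg1.
      by rewrite groupV cycle_id.
    exists x, y, (x * y); split => //.
    + split => //.
        apply: contraNneq yx => h; have -> : y = 1 by rewrite -(mulKg x y) -h mulVg.
        exact: group1.
      by apply: contraNneq x1 => h; rewrite -(mulgK y x) -h mulgV.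
    + split => //; apply/eqP; rewrite ep -dvdn_prime2 ?(epo _ xyG xy1) //.
      have x2 : x ^+ 2 = 1 by rewrite -ep -ox expg_order.
      have y2 : y ^+ 2 = 1 by rewrite -ep -oy expg_order.
      rewrite order_dvdn expgMn; last exact: cxy.
      by rewrite x2 y2 mulg1.
  have xyG : x ^ y \in G by rewrite groupJ.
  exists x, y, (x ^ y); split => //.
  + split => //.
      apply: contraNneq cxy => h; apply/eqP; by rewrite {1}conjgC -h.
    apply: contraNneq xy => h.
    by apply/eqP; apply: (mulIg y); rewrite {3}h conjgE mulKVg.
  + by split; rewrite // orderJ.
have xV : x != x^-1.
  apply/eqP => h; have : #[x] %| 2.
    by rewrite order_dvdn expgS expg1 {2}h mulgV.
  by rewrite ox ep.
exists x, x^-1, y; split => //.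
- by rewrite groupV.
- split => //; apply: contraNneq yx => <-; by rewrite groupV cycle_id.
- by rewrite orderV.
Qed.

Lemma bad_three (gT : finGroupType) (G : {group gT}) p : EPO G ->
  (p = 2 \/ p = 3) -> bad_sylow G p -> three G p.
Proof.
move=> epo hp [P [sylP hP]].
have pp : prime p by case: hp => ->.
rewrite inE in sylP.
have sPG := pHall_sub sylP; have pP := pHall_pgroup sylP.
have P1 : P != 1 :> {set gT}.
  apply/negP => /eqP P1; move: hP; rewrite P1 cyclic1 normal1.
  by case.
have [x xP x1] := trivgPn _ P1.
have ox := ord_p epo pp pP sPG xP x1.
have xG := subsetP sPG _ xP.
case: hP => [ncyc | nnorm].
  have : ~~ (P \subset <[x]>).
    apply: contra ncyc => sPx; have -> : P = <[x]>%G.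
      by apply/val_inj/eqP; rewrite /= eqEsubset sPx cycle_subG.
    exact: cycle_cyclic.
  case/subsetPn => y yP yx.
  have y1 : y != 1 by apply: contraNneq yx => ->; apply: group1.
  exact: (two_to_three epo hp xG (subsetP sPG _ yP) ox (ord_p epo pp pP sPG yP y1) yx).
move: nnorm; rewrite /normal sPG /= => /subsetPn [g gG gN].
have PgP : ~~ ((P :^ g) \subset P).
  apply: contra gN => sPgP; apply/normP/eqP.
  by rewrite eqEcard sPgP cardJg leqnn.
case/subsetPn: PgP => y yPg yP.
have yg : y ^ g^-1 \in P by rewrite -mem_conjg.
have yG : y \in G by rewrite -(conjgKV g y) groupJ // (subsetP sPG).
have y1 : y ^ g^-1 != 1.
  apply: contraNneq yP => h; move: yPg; rewrite -(conjgKV g y) h conj1g => _.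
  exact: group1.
have oy : #[y] = p by rewrite -(orderJ y g^-1); apply: (ord_p epo pp pP sPG yg y1).
have yx : y \notin <[x]>.
  by apply: contra yP; apply/subsetP; rewrite cycle_subG.
exact: (two_to_three epo hp xG yG ox oy yx).
Qed.

Lemma three_bad (gT : finGroupType) (G : {group gT}) p : EPO G ->
  (p = 2 \/ p = 3) -> three G p -> bad_sylow G p.
Proof.
move=> epo hp [a [b [c [[aG bG cG] [ab ac bc] [oa ob oc]]]]].
have pp : prime p by case: hp => ->.
have [P sylP] := Sylow_exists p G.
apply: NNPP => nb.
have : cyclic P && (P <| G).
  apply/negPn/negP => h; apply: nb; exists P; split; first by rewrite inE.
  by move: h; rewrite negb_and => /orP.
case/andP => cP nP.
have sPG := pHall_sub sylP; have pP := pHall_pgroup sylP.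
have inP : forall z, z \in G -> #[z] = p -> z \in P.
  by move=> z zG oz; rewrite (mem_normal_Hall sylP nP zG) /p_elt oz pnat_id.
have n1 : forall z : gT, #[z] = p -> 1 != z.
  by move=> z oz; rewrite eq_sym -order_eq1 oz; case: hp => ->.
case/cyclicP: cP => g Pg.
have gP : g \in P by rewrite Pg cycle_id.
have : 4 <= #|P|.
  rewrite cardE; apply: (uniq_leq_size (s1 := [:: 1; a; b; c])).
    rewrite /= !inE !negb_or n1 // n1 // n1 // ab ac bc.
    by [].
  move=> z; rewrite !inE => /or4P[]/eqP->; rewrite mem_enum ?group1 ?inP //.
rewrite Pg -/(order g) => h4.
have g1 : g != 1 by apply: contraTneq h4 => ->; rewrite order1.
move: h4; rewrite (ord_p epo pp pP sPG gP g1).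
by case: hp => ->.
Qed.

Lemma three_iff (gT : finGroupType) (G : {group gT}) p : EPO G -> prime p ->
  (three G p <-> p %| #|G| /\
     (5 <= p \/ (p = 3 /\ bad_sylow G 3) \/ (p = 2 /\ bad_sylow G 2))).
Proof.
move=> epo pp; split.
  move=> t; have pG : p %| #|G|.
    by case: t => a [b [c [[aG _ _] _ [oa _ _]]]]; rewrite -oa order_dvdG.
  split => //.
  case: (leqP 5 p) => [|p5]; first by left.
  have hp : p = 2 \/ p = 3.
    by move: pp p5; case: p {pG t} => [|[|[|[|[|]]]]] //; auto.
  have b := three_bad epo hp t.
  right; case: hp b => hp; rewrite hp => b; [right|left]; split => //.
case=> pG [p5|[[-> b]|[-> b]]].
- exact: three_big.
- by apply: bad_three b => //; right.
- by apply: bad_three b => //; left.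
Qed.

Theorem mainTheorem4 (gT : finGroupType) (G : {group gT}) :
  EPO G ->
  (cyclically_separable (@osg_adj gT) G <->
   ((exists p q : nat, [/\ prime p, prime q, 5 <= q, q < p & p * q %| #|G|]) \/
    (let c1 := exists p : nat, [/\ prime p, 5 <= p & p %| #|G|] in
     let c2 := (3 %| #|G|) /\ bad_sylow G 3 in
     let c3 := (2 %| #|G|) /\ bad_sylow G 2 in
     (c1 /\ c2) \/ (c1 /\ c3) \/ (c2 /\ c3)))).
Proof.
move=> epo; rewrite graph_iff //; cbv zeta; split.
  case=> p [q [pp pq npq /(three_iff epo pp) [pG hp] /(three_iff epo pq) [qG hq]]].
  have cop : forall m n, prime m -> prime n -> m != n -> m %| #|G| -> n %| #|G| -> m * n %| #|G|.
    move=> m n pm pn mn mG nG; rewrite Gauss_dvd ?mG ?nG // prime_coprime //.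
    by rewrite dvdn_prime2 // eq_sym.
  case: hp => [p5|[[ep bp]|[ep bp]]]; case: hq => [q5|[[eqq bq]|[eqq bq]]].
  - left; case: (ltngtP p q) => h.
    + by exists q, p; split => //; rewrite cop // eq_sym.
    + by exists p, q; split => //; rewrite cop.
    + by rewrite h eqxx in npq.
  - by right; left; split; [by exists p; split | by subst q; split].
  - by right; right; left; split; [by exists p; split | by subst q; split].
  - by right; left; split; [by exists q; split | by subst p; split].
  - by rewrite ep eqq in npq.
  - by right; right; right; split; [by subst p; split | by subst q; split].
  - by right; right; left; split; [by exists q; split | by subst p; split].
  - by right; right; right; split; [by subst q; split | by subst p; split].
  - by rewrite ep eqq in npq.
have t5 : forall p, prime p -> 5 <= p -> p %| #|G| -> three G p.
  by move=> p pp p5 pG; apply/(three_iff epo pp); split => //; left.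
have t3 : 3 %| #|G| /\ bad_sylow G 3 -> three G 3.
  by case=> h b; apply/(three_iff epo) => //; split => //; right; left.
have t2 : 2 %| #|G| /\ bad_sylow G 2 -> three G 2.
  by case=> h b; apply/(three_iff epo) => //; split => //; right; right.
case=> [[p [q [pp pq q5 qp pqG]]]|[[[p [pp p5 pG]] h3]|[[[p [pp p5 pG]] h2]|[h3 h2]]]].
- exists p, q; split => //.
  + by rewrite eq_sym ltn_eqF.
  + apply: t5 => //; first exact: leq_trans (ltnW qp).
    exact: dvdn_trans (dvdn_mulr _ _) pqG.
  + by apply: t5 => //; exact: dvdn_trans (dvdn_mull _ _) pqG.
- exists p, 3%N; split => //; [|exact: t5|exact: t3].
  by apply: contraTneq p5 => ->.
- exists p, 2%N; split => //; [|exact: t5|exact: t2].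
  by apply: contraTneq p5 => ->.
- by exists 3%N, 2%N; split => //; [exact: t3|exact: t2].
Qed.
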